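(* Assume the setting and the nsCRAIG recurrence described in the context. Then every $\alpha_k$ produced by the recurrence is strictly positive (so the recurrence can only stop through $\beta_{k+1}=0$), and if $\beta_{k+1}=0$ for some $k$, then the nsCRAIG iterates $(u^{(k)},p^{(k)})$ equal the exact solution $(u_*,p_* )$ of the generalized saddle point system.
   Context: Setting: $M\in\mathbb{R}^{m\times m}$ is nonsymmetric and positive definite ($x^TMx>0$ for all $x\ne0$); $A\in\mathbb{R}^{m\times n}$ ($n\le m$) has full column rank; $C\in\mathbb{R}^{n\times n}$ is symmetric positive semidefinite; $b\in\mathbb{R}^n$ is nonzero; $N\in\mathbb{R}^{n\times n}$ is symmetric positive definite. Write $\|x\|_G=(x^TGx)^{1/2}$ for $G$ positive definite (for nonsymmetric $M$ this is the norm of its symmetric part). The generalized saddle point system is $Mu+Ap=0$, $A^Tu-Cp=b$, with unique solution $(u_*,p_* )$; $S=A^TM^{-1}A+C$. nsCRAIG recurrence (exact arithmetic): Initialization: $\beta_1=\|b\|_{N^{-1}}$, $q_1=N^{-1}b/\beta_1$, $Q_1=[q_1]$, $r_1=q_1$, $w_1=M^{-1}Aq_1$, $s_1=Cr_1$, $\alpha_1=(w_1^TMw_1+r_1^Ts_1)^{1/2}$, $v_1=w_1/\alpha_1$, $t_1=s_1/\alpha_1$, $\chi_1=\beta_1/\alpha_1$. For $k=1,2,\dots$: $\hat g_k=N^{-1}(A^Tv_k+t_k)$, $h_k=Q_k^TN\hat g_k\in\mathbb{R}^k$, $g_k=\hat g_k-Q_kh_k$, $\beta_{k+1}=\|g_k\|_N$;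 if $\beta_{k+1}=0$ the recurrence stops; otherwise $q_{k+1}=g_k/\beta_{k+1}$, $Q_{k+1}=[Q_k,q_{k+1}]$, $w_{k+1}=M^{-1}Aq_{k+1}-\beta_{k+1}v_k$, $r_{k+1}=q_{k+1}-(\beta_{k+1}/\alpha_k)r_k$, $s_{k+1}=Cr_{k+1}$, $\alpha_{k+1}=(w_{k+1}^TMw_{k+1}+r_{k+1}^Ts_{k+1})^{1/2}$, $v_{k+1}=w_{k+1}/\alpha_{k+1}$, $t_{k+1}=s_{k+1}/\alpha_{k+1}$, $\chi_{k+1}=-(\beta_{k+1}/\alpha_{k+1})\chi_k$. Matrices: $B_k\in\mathbb{R}^{k\times k}$ upper bidiagonal with $(B_k)_{ii}=\alpha_i$, $(B_k)_{i,i+1}=\beta_{i+1}$; $H_k\in\mathbb{R}^{k\times k}$ upper Hessenberg whose $j$-th column has entries $(H_k)_{ij}=(h_j)_i$ for $i\le j$, $(H_k)_{j+1,j}=\beta_{j+1}$ (if $j<k$), and zeros otherwise. The nsCRAIG iterates at step $k$ are $y_k=-B_k^{-1}H_k^{-1}(\beta_1e_1)$, $p^{(k)}=Q_ky_k$, $u^{(k)}=-M^{-1}Ap^{(k)}$, with $e_1$ the first unit vector of $\mathbb{R}^k$. *)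

(* Defs.v *)
From mathcomp Require Import all_boot all_order all_algebra.
Set Implicit Arguments. Unset Strict Implicit. Unset Printing Implicit Defensive.
Import Order.TTheory GRing.Theory Num.Theory.
Local Open Scope ring_scope.

Definition qf (R : rcfType) (k : nat) (G : 'M[R]_k) (x : 'cV[R]_k) : R :=
  (x^T *m G *m x) 0 0.

Definition Gnorm (R : rcfType) (k : nat) (G : 'M[R]_k) (x : 'cV[R]_k) : R :=
  Num.sqrt (qf G x).

Definition posdef (R : rcfType) (k : nat) (G : 'M[R]_k) : Prop :=
  forall x : 'cV[R]_k, x != 0 -> 0 < qf G x.

Definition possemidef (R : rcfType) (k : nat) (G : 'M[R]_k) : Prop :=
  forall x : 'cV[R]_k, 0 <= qf G x.

(* B_K: K x K upper bidiagonal, (B)_{ii} = alpha_i, (B)_{i,i+1} = beta_{i+1}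
   (1-based indices in the paper; matrix indices here are 0-based) *)
Definition Bmat (R : rcfType) (alpha beta : nat -> R) (K : nat) : 'M[R]_K :=
  \matrix_(i < K, j < K)
    (if (j == i :> nat) then alpha i.+1
     else if (j == i.+1 :> nat) then beta j.+1 else 0).

(* H_K: K x K upper Hessenberg, column j (1-based) has (h_j)_i for i <= j,
   beta_{j+1} at row j+1, zeros otherwise. h j i = (h_j)_i (1-based). *)
Definition Hmat (R : rcfType) (h : nat -> nat -> R) (beta : nat -> R) (K : nat)
  : 'M[R]_K :=
  \matrix_(i < K, j < K)
    (if (i <= j)%N then h j.+1 i.+1
     else if (i == j.+1 :> nat) then beta j.+2 else 0).

Definition Qmat (R : rcfType) (n : nat) (q : nat -> 'cV[R]_n) (K : nat)
  : 'M[R]_(n, K) :=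
  \matrix_(i < n, j < K) q j.+1 i 0.

Definition e1 (R : rcfType) (K : nat) : 'cV[R]_K :=
  \col_(i < K) (if (i == 0 :> nat) then 1 else 0).

Definition craig_y (R : rcfType) (alpha beta : nat -> R) (h : nat -> nat -> R)
  (K : nat) : 'cV[R]_K :=
  - (invmx (Bmat alpha beta K) *m invmx (Hmat h beta K) *m (beta 1 *: e1 R K)).

Definition craig_p (R : rcfType) (n : nat) (q : nat -> 'cV[R]_n)
  (alpha beta : nat -> R) (h : nat -> nat -> R) (K : nat) : 'cV[R]_n :=
  Qmat q K *m craig_y alpha beta h K.

Definition craig_u (R : rcfType) (m n : nat) (M : 'M[R]_m) (A : 'M[R]_(m, n))
  (q : nat -> 'cV[R]_n) (alpha beta : nat -> R) (h : nat -> nat -> R) (K : nat)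
  : 'cV[R]_m :=
  - (invmx M *m A *m craig_p q alpha beta h K).

(* Main.v *)
Require Import Defs.
From mathcomp Require Import all_boot all_order all_algebra.
From mathcomp Require Import ring lra.
Import Order.TTheory GRing.Theory Num.Theory.
Local Open Scope ring_scope.
Set Implicit Arguments. Unset Strict Implicit.


Definition bf {R : rcfType} (k : nat) (G : 'M[R]_k) (x y : 'cV[R]_k) : R := (x^T *m G *m y) 0 0.

Lemma bfDr {R : rcfType} k (G : 'M[R]_k) x y z : bf G x (y + z) = bf G x y + bf G x z.
Proof. by rewrite /bf mulmxDr mxE. Qed.
Lemma bfNr {R : rcfType} k (G : 'M[R]_k) x y : bf G x (- y) = - bf G x y.
Proof. by rewrite /bf mulmxN mxE. Qed.
Lemma bfBr {R : rcfType} k (G : 'M[R]_k) x y z : bf G x (y - z) = bf G x y - bf G x z.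
Proof. by rewrite bfDr bfNr. Qed.
Lemma bfZr {R : rcfType} k (G : 'M[R]_k) x a y : bf G x (a *: y) = a * bf G x y.
Proof. by rewrite /bf -scalemxAr mxE. Qed.
Lemma bf_sumr {R : rcfType} k (G : 'M[R]_k) x (I : Type) (r : seq I) (P : pred I) (F : I -> 'cV_k) :
  bf G x (\sum_(i <- r | P i) F i) = \sum_(i <- r | P i) bf G x (F i).
Proof. by rewrite /bf mulmx_sumr summxE. Qed.
Lemma bf0r {R : rcfType} k (G : 'M[R]_k) x : bf G x 0 = 0.
Proof. by rewrite /bf mulmx0 mxE. Qed.
Lemma bf0l {R : rcfType} k (G : 'M[R]_k) x : bf G 0 x = 0.
Proof. by rewrite /bf trmx0 !mul0mx mxE. Qed.

Lemma scal_tr {R : rcfType} (X : 'M[R]_1) : X^T 0 0 = X 0 0.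
Proof. by rewrite mxE. Qed.

Lemma bf_sym {R : rcfType} k (G : 'M[R]_k) x y : G^T = G -> bf G x y = bf G y x.
Proof.
move=> HG; rewrite /bf -scal_tr !trmx_mul trmxK HG mulmxA //.
Qed.

Lemma qf_bf {R : rcfType} k (G : 'M[R]_k) x : qf G x = bf G x x.
Proof. by []. Qed.

Lemma posdef_ge0 {R : rcfType} k (G : 'M[R]_k) x : posdef G -> 0 <= qf G x.
Proof.
move=> HG; have [->|nz] := eqVneq x 0.
  by rewrite /qf mulmx0 mxE.
by apply: ltW; apply: HG.
Qed.

Lemma posdef_eq0 {R : rcfType} k (G : 'M[R]_k) x : posdef G -> qf G x = 0 -> x = 0.
Proof.
move=> HG hq; apply/eqP; apply: contraT => nz.
by have := HG _ nz; rewrite hq ltxx.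
Qed.

Lemma posdef_unit {R : rcfType} k (G : 'M[R]_k) : posdef G -> G \in unitmx.
Proof.
move=> HG; rewrite unitmxE unitfE; apply/negP => /det0P [v nz hv].
have : v^T != 0 by apply: contra nz => /eqP h; rewrite -(trmxK v) h trmx0.
move=> /HG; rewrite /qf trmxK hv mul0mx mxE ltxx //.
Qed.

Lemma qf_tr {R : rcfType} k (G : 'M[R]_k) y : qf G^T y = qf G y.
Proof.
rewrite /qf -[in RHS]scal_tr !trmx_mul trmxK mulmxA //.
Qed.

Lemma posdef_inv {R : rcfType} k (G : 'M[R]_k) : posdef G -> posdef (invmx G).
Proof.
move=> HG x nz.
have uG := posdef_unit HG.
have [y hy] : exists y, y = invmx G *m x by eexists.
have hx : x = G *m y by rewrite hy mulKVmx.
have ynz : y != 0.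
  by apply: contra nz => /eqP h; rewrite hx h mulmx0.
have -> : qf (invmx G) x = qf G^T y.
  by rewrite /qf hx trmx_mul -!mulmxA (mulmxA (invmx G)) mulVmx // mul1mx.
by rewrite qf_tr; apply: HG.
Qed.

Lemma sum_delta {R : rcfType} (V : lmodType R) a b i (F : nat -> V) :
  \sum_(a <= l < b) (i == l)%:R *: F l = if (a <= i < b)%N then F i else 0.
Proof.
case: ifP => hi.
  rewrite (bigD1_seq i) /= ?mem_index_iota ?iota_uniq // eqxx scale1r big1 ?addr0 //.
  by move=> l /negbTE; rewrite eq_sym => ->; rewrite scale0r.
rewrite big1_seq // => l /andP [_]; rewrite mem_index_iota => hl.
by case: eqP => [e|_]; [rewrite e hl in hi|rewrite scale0r].
Qed.

Lemma mx_entry_mul {R : rcfType} p q r' (X : 'M[R]_(p, q)) (Y : 'M[R]_(q, r')) i j :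
  (X *m Y) i j = (row i X *m col j Y) 0 0.
Proof. by rewrite !mxE; apply: eq_bigr => l _; rewrite !mxE. Qed.

Definition Cmat {R : rcfType} p (x : nat -> 'cV[R]_p) K : 'M[R]_(p, K) :=
  \matrix_(i < p, j < K) x j.+1 i 0.

Lemma col_Cmat {R : rcfType} p (x : nat -> 'cV[R]_p) K (j : 'I_K) : col j (Cmat (p:=p) x K) = x j.+1.
Proof. by apply/colP => i; rewrite !mxE. Qed.

Lemma eq_Cmat {R : rcfType} p (x y : nat -> 'cV[R]_p) K :
  (forall j, (1 <= j <= K)%N -> x j = y j) -> Cmat x K = Cmat y K.
Proof. by move=> H; apply/matrixP => i j; rewrite !mxE H // ltn_ord. Qed.

Lemma mul_Cmat {R : rcfType} p p' (X : 'M[R]_(p', p)) (x : nat -> 'cV[R]_p) K : X *m Cmat x K = Cmat (fun j => X *m x j) K.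
Proof. by apply/matrixP => i j; rewrite !mxE; apply: eq_bigr => l _; rewrite !mxE. Qed.

Lemma Cmat_mul {R : rcfType} p K c (x : nat -> 'cV[R]_p) (f : nat -> nat -> R) :
  Cmat x K *m (\matrix_(l < K, k < c) f l k) =
  Cmat (fun j => \sum_(0 <= l < K) f l j.-1 *: x l.+1) c.
Proof.
apply/matrixP => i k; rewrite !mxE summxE big_mkord.
by apply: eq_bigr => l _; rewrite !mxE mulrC.
Qed.



Lemma Cmat_B {R : rcfType} p K (x : nat -> 'cV[R]_p) (alpha beta : nat -> R) :
  Cmat x K *m Bmat alpha beta K =
  Cmat (fun j => alpha j *: x j + (if (1 < j)%N then beta j *: x j.-1 else 0)) K.
Proof.
rewrite /Bmat (Cmat_mul _ _ _ (fun l k => if k == l then alpha l.+1 else if k == l.+1 then beta k.+1 else 0)); apply: eq_Cmat => -[|j] //= jK.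
transitivity (\sum_(0 <= l < K) ((j == l)%:R *: (alpha l.+1 *: x l.+1)
                      + (j == l.+1)%:R *: (beta j.+1 *: x l.+1))).
  apply: eq_big_nat => l _.
  case: (j =P l) => [->|_].
    by rewrite eqn_leq ltnn /= andbF /= mulr0n scale0r addr0 scale1r.
  by rewrite /= mulr0n scale0r add0r; case: (j =P l.+1) => _; rewrite /= ?mulr0n ?mulr1n ?scale1r ?scale0r.
rewrite big_split /= sum_delta /= jK.
case: j jK => [|j] jK /=.
  by rewrite big1 // => l _; rewrite scale0r.
under eq_bigr => l _ do rewrite eqSS.
by rewrite sum_delta /= ltnW.
Qed.

Lemma Cmat_H {R : rcfType} p K (x : nat -> 'cV[R]_p) (h : nat -> nat -> R) (beta : nat -> R) :
  Cmat x K *m Hmat h beta K =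
  Cmat (fun j => \sum_(1 <= l < j.+1) h j l *: x l
                 + (if (j < K)%N then beta j.+1 *: x j.+1 else 0)) K.
Proof.
rewrite /Hmat (Cmat_mul _ _ _ (fun l k => if (l <= k)%N then h k.+1 l.+1 else if l == k.+1 then beta k.+2 else 0)); apply: eq_Cmat => -[|j] //= jK.
rewrite (big_cat_nat _ (n := j.+1)) //=.
congr (_ + _).
  rewrite (big_addn 0 j.+2 1) subn1 /=.
  apply: eq_big_nat => l /andP [_ hl].
  by rewrite -ltnS hl addn1.
transitivity (\sum_(j.+1 <= l < K) (j.+1 == l)%:R *: (beta j.+2 *: x l.+1)).
  apply: eq_big_nat => l /andP [hl _].
  rewrite leqNgt hl /=.
  by rewrite eq_sym; case: eqP => [->|_]; rewrite /= ?mulr1n ?scale1r ?mulr0n ?scale0r.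
by rewrite (sum_delta _ _ _ (fun l => beta j.+2 *: x l.+1)) leqnn.
Qed.

Lemma Cmat_e1 {R : rcfType} p K (x : nat -> 'cV[R]_p) : (0 < K)%N ->
  Cmat x K *m e1 R K = x 1%N.
Proof.
move=> K0; rewrite /e1 (Cmat_mul _ _ _ (fun l k => if l == 0%N then 1 else 0)).
apply/colP => i; rewrite !mxE /=.
rewrite (_ : \sum_(0 <= l < K) _ = \sum_(0 <= l < K) (0%N == l)%:R *: x l.+1).
  by rewrite sum_delta K0.
by apply: eq_big_nat => l _; rewrite eq_sym; case: eqP.
Qed.

Lemma sum_deltaR (R : rcfType) a b i (F : nat -> R) :
  \sum_(a <= l < b) (i == l)%:R * F l = if (a <= i < b)%N then F i else 0.
Proof.
case: ifP => hi.
  rewrite (bigD1_seq i) /= ?mem_index_iota ?iota_uniq // eqxx mul1r big1 ?addr0 //.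
  by move=> l /negbTE; rewrite eq_sym => ->; rewrite mul0r.
rewrite big1_seq // => l /andP [_]; rewrite mem_index_iota => hl.
by case: eqP => [e|_]; [rewrite e hl in hi|rewrite mul0r].
Qed.

Unset Implicit Arguments.
Set Strict Implicit.

Theorem mainTheorem9 (R : rcfType) (m n : nat)
  (M : 'M[R]_m) (A : 'M[R]_(m, n)) (C N : 'M[R]_n) (b : 'cV[R]_n)
  (ustar : 'cV[R]_m) (pstar : 'cV[R]_n)
  (q r s t ghat g : nat -> 'cV[R]_n) (w v : nat -> 'cV[R]_m)
  (alpha beta : nat -> R) (h : nat -> nat -> R) (K : nat) :
  (1 <= K)%N ->
  (* setting *)
  posdef M ->
  (n <= m)%N -> \rank A = n ->
  C^T = C -> possemidef C ->
  b != 0 ->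
  N^T = N -> posdef N ->
  (* (ustar, pstar) solves the generalized saddle point system *)
  M *m ustar + A *m pstar = 0 ->
  A^T *m ustar - C *m pstar = b ->
  (* initialization *)
  beta 1%N = Gnorm (invmx N) b ->
  q 1%N = (beta 1%N)^-1 *: (invmx N *m b) ->
  r 1%N = q 1%N ->
  w 1%N = invmx M *m A *m q 1%N ->
  (* quantities computed at every step j = 1..K *)
  (forall j, (1 <= j <= K)%N -> s j = C *m r j) ->
  (forall j, (1 <= j <= K)%N ->
     alpha j = Num.sqrt (qf M (w j) + ((r j)^T *m s j) 0 0)) ->
  (forall j, (1 <= j <= K)%N -> v j = (alpha j)^-1 *: w j) ->
  (forall j, (1 <= j <= K)%N -> t j = (alpha j)^-1 *: s j) ->
  (forall j, (1 <= j <= K)%N -> ghat j = invmx N *m (A^T *m v j + t j)) ->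
  (forall j i, (1 <= j <= K)%N -> (1 <= i <= j)%N ->
     h j i = ((q i)^T *m N *m ghat j) 0 0) ->
  (forall j, (1 <= j <= K)%N ->
     g j = ghat j - \sum_(1 <= i < j.+1) h j i *: q i) ->
  (forall j, (1 <= j <= K)%N -> beta j.+1 = Gnorm N (g j)) ->
  (* the recurrence did not stop before step K, and continued *)
  (forall j, (1 <= j < K)%N -> beta j.+1 != 0) ->
  (forall j, (1 <= j < K)%N -> q j.+1 = (beta j.+1)^-1 *: g j) ->
  (forall j, (1 <= j < K)%N ->
     w j.+1 = invmx M *m A *m q j.+1 - beta j.+1 *: v j) ->
  (forall j, (1 <= j < K)%N ->
     r j.+1 = q j.+1 - (beta j.+1 / alpha j) *: r j) ->
  (forall j, (1 <= j <= K)%N -> 0 < alpha j) /\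
  (beta K.+1 = 0 ->
     craig_u M A q alpha beta h K = ustar /\ craig_p q alpha beta h K = pstar).
Proof.
move=> K1 HM Hnm HA HCs HC Hb HNs HN Hs1 Hs2 Hb1 Hq1 Hr1 Hw1 Hs Halpha Hv Ht
  Hghat Hh Hg Hbeta Hbnz Hq Hw Hr.
have uM := posdef_unit HM.
have uN := posdef_unit HN.
have HAinj : forall z : 'cV_n, A *m z = 0 -> z = 0.
  move=> z Az; have rf : row_free A^T by rewrite /row_free mxrank_tr HA.
  have := mulmx_free_eq0 z^T rf; rewrite -trmx_mul Az trmx0 eqxx => /esym/eqP.
  by move=> e; rewrite -(trmxK z) e trmx0.
have qb : 0 < qf (invmx N) b by apply: posdef_inv.
have b1pos : 0 < beta 1%N by rewrite Hb1 /Gnorm sqrtr_gt0.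
have b1sq : beta 1%N ^+ 2 = qf (invmx N) b by rewrite Hb1 /Gnorm sqr_sqrtr // ltW.
have bsq : forall j, (1 <= j <= K)%N -> beta j.+1 ^+ 2 = bf N (g j) (g j).
  by move=> j hj; rewrite Hbeta // /Gnorm sqr_sqrtr // posdef_ge0.
have orth1 : bf N (q 1%N) (q 1%N) = 1.
  rewrite Hq1 bfZr bf_sym // bfZr /bf trmx_mul trmx_inv HNs.
  rewrite -mulmxA (mulmxA N) mulmxV // mul1mx.
  rewrite -/(qf (invmx N) b) -b1sq; field; exact: lt0r_neq0.
have orthS : forall k, (1 <= k < K)%N ->
   (forall i j, (1 <= i <= k)%N -> (1 <= j <= k)%N -> bf N (q i) (q j) = (i == j)%:R) ->
   (forall i, (1 <= i <= k)%N -> bf N (q i) (q k.+1) = 0) /\ bf N (q k.+1) (q k.+1) = 1.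
  move=> k /andP [k1 kK] IH.
  have hk : (1 <= k <= K)%N by rewrite k1 ltnW.
  have bnz := Hbnz k (introT andP (conj k1 kK)).
  split.
    move=> i hi; rewrite Hq ?k1 // bfZr Hg // bfBr bf_sumr.
    have -> : bf N (q i) (ghat k) = h k i by rewrite Hh.
    rewrite (eq_big_nat _ _ (F2 := fun l => (i == l)%:R * h k l)); last first.
      by move=> l hl; rewrite bfZr IH // mulrC.
    rewrite sum_deltaR ltnS hi subrr mulr0 //.
  rewrite Hq ?k1 // bfZr bf_sym // bfZr -bsq //.
  field; exact: bnz.
have orth : forall k, (k <= K)%N -> forall i j, (1 <= i <= k)%N -> (1 <= j <= k)%N ->
    bf N (q i) (q j) = (i == j)%:R.
  elim=> [|k IH] kK i j hi hj; first by move: hi => /andP [h1 h2]; move: (leq_trans h1 h2).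
  case: (posnP k) => [k0|kpos].
    move: hi hj; rewrite k0 -!eqn_leq => /eqP <- /eqP <-; by rewrite orth1.
  have [o1 o2] := orthS k (introT andP (conj kpos kK)) (IH (ltnW kK)).
  move: hi hj => /andP [i1 ik] /andP [j1 jk].
  rewrite leq_eqVlt in ik; rewrite leq_eqVlt in jk.
  case/orP: ik => [/eqP ->|ik]; case/orP: jk => [/eqP ->|jk].
  - by rewrite o2 eqxx.
  - by rewrite bf_sym // o1 ?j1 // (gtn_eqF jk).
  - by rewrite o1 ?i1 // (ltn_eqF ik).
  - by apply: IH; [exact: ltnW | rewrite i1 | rewrite j1].
have orthK : forall i j, (1 <= i <= K)%N -> (1 <= j <= K)%N ->
    bf N (q i) (q j) = (i == j)%:R by exact: orth.
have rlem : forall j, (1 <= j <= K)%N ->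
    bf N (q j) (r j) = 1 /\ forall i, (j < i <= K)%N -> bf N (q i) (r j) = 0.
  elim=> [|j IH] //= jK.
  case: (posnP j) => [->|jpos].
    rewrite Hr1; split; first by rewrite orthK ?K1.
    by move=> i /andP [i1 iK]; rewrite orthK ?iK ?K1 ?(ltnW i1) // eqn_leq leqNgt i1.
  have hj : (1 <= j < K)%N by rewrite jpos.
  have [IH1 IH2] := IH (introT andP (conj jpos (ltnW jK))).
  rewrite Hr // bfBr bfZr IH2 ?ltnSn ?(ltnW jK) // mulr0 subr0.
  split; first by rewrite orthK ?eqxx // ltn0Sn.
  move=> i /andP [ji iK].
  rewrite bfBr bfZr IH2 ?iK ?(ltn_trans (ltnSn j) ji) // mulr0 subr0.
  by rewrite orthK ?iK ?(ltn_trans (ltn0Sn j) ji) ?ltn0Sn // (gtn_eqF ji).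
have wlem : forall j, (1 <= j <= K)%N -> w j = invmx M *m A *m r j.
  elim=> [|j IH] //= jK.
  case: (posnP j) => [->|jpos]; first by rewrite Hw1 Hr1.
  have hj : (1 <= j < K)%N by rewrite jpos.
  rewrite Hw // Hr // Hv ?jpos ?(ltnW jK) // IH ?jpos ?(ltnW jK) //.
  by rewrite mulmxBr scalerA -scalemxAr.
have apos : forall j, (1 <= j <= K)%N -> 0 < alpha j.
  move=> j hj.
  have rnz : r j != 0.
    apply/negP => /eqP e; have [h1 _] := rlem j hj.
    by move: h1; rewrite e bf0r => /eqP; rewrite eq_sym oner_eq0.
  have Arnz : A *m r j != 0 by apply: contra rnz => /eqP /HAinj ->.
  have wnz : w j != 0.
    rewrite wlem //; apply: contra Arnz => /eqP e.
    by rewrite -(mulKVmx uM (A *m r j)) (mulmxA (invmx M)) e mulmx0.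
  have p1 := HM _ wnz.
  have p2 : 0 <= ((r j)^T *m s j) 0 0 by rewrite Hs // mulmxA; apply: HC.
  by rewrite Halpha // sqrtr_gt0; lra.
split; first exact: apos.
move=> bK1.
have gK0 : g K = 0.
  apply: (posdef_eq0 HN); apply/eqP; rewrite eq_le posdef_ge0 // andbT.
  have := Hbeta K; rewrite K1 leqnn bK1 /Gnorm => /(_ isT) /esym/eqP.
  by rewrite sqrtr_eq0.
have ghatE : forall j, (1 <= j <= K)%N -> ghat j =
    \sum_(1 <= l < j.+1) h j l *: q l + (if (j < K)%N then beta j.+1 *: q j.+1 else 0).
  move=> j /andP [j1 jK]; have := Hg j (introT andP (conj j1 jK)).
  move/(congr1 (fun x => x + \sum_(1 <= i < j.+1) h j i *: q i)); rewrite subrK => <-.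
  rewrite addrC; congr (_ + _).
  case: ifP => jK'.
    have bnz := Hbnz j (introT andP (conj j1 jK')).
    by rewrite Hq ?j1 // scalerA mulfV // scale1r.
  by have -> : j = K by apply/eqP; rewrite eqn_leq jK leqNgt jK'.
have QE : Qmat q K = Cmat q K by [].
have QH : Qmat q K *m Hmat h beta K = Cmat ghat K.
  by rewrite QE Cmat_H; apply: eq_Cmat => j hj; rewrite ghatE.
set S := A^T *m invmx M *m A + C.
have Nghat : forall j, (1 <= j <= K)%N -> N *m ghat j = A^T *m v j + t j.
  by move=> j hj; rewrite Hghat // mulKVmx.
have MAq : forall j, (1 <= j <= K)%N -> invmx M *m A *m q j =
    alpha j *: v j + (if (1 < j)%N then beta j *: v j.-1 else 0).
  move=> [|[|j]] //= hj.
    by rewrite addr0 Hv // scalerA mulfV ?scale1r ?Hw1 //; apply: lt0r_neq0; exact: apos.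
  have hj' : (1 <= j.+1 < K)%N by [].
  rewrite -{1}(subrK (beta j.+2 *: v j.+1) (invmx M *m A *m q j.+2)) -Hw //.
  by rewrite (Hv j.+2) // scalerA mulfV ?scale1r //; apply: lt0r_neq0; exact: apos.
have Cq : forall j, (1 <= j <= K)%N -> C *m q j =
    alpha j *: t j + (if (1 < j)%N then beta j *: t j.-1 else 0).
  move=> [|[|j]] //= hj.
    rewrite addr0 Ht // scalerA mulfV ?scale1r; first by rewrite Hs // Hr1.
    by apply: lt0r_neq0; exact: apos.
  have hj' : (1 <= j.+1 < K)%N by [].
  have hj'' : (1 <= j.+1 <= K)%N by exact: ltnW.
  rewrite -{1}(subrK ((beta j.+2 / alpha j.+1) *: r j.+1) (q j.+2)) -Hr //.
  rewrite mulmxDr -scalemxAr -!Hs // Ht // Ht // !scalerA mulfV; last first.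
    by apply: lt0r_neq0; exact: apos.
  by rewrite scale1r.
have GB : N *m (Cmat ghat K *m Bmat alpha beta K) = S *m Cmat q K.
  rewrite Cmat_B !mul_Cmat; apply: eq_Cmat => j hj.
  rewrite /S mulmxDl.
  have -> : A^T *m invmx M *m A *m q j = A^T *m (invmx M *m A *m q j) by rewrite !mulmxA.
  rewrite MAq // Cq //.
  rewrite mulmxDr -scalemxAr Nghat //.
  case: ifP => j1.
    have hj1 : (1 <= j.-1 <= K)%N.
      by case: j j1 hj => [|[|j]] //= _ hh; exact: ltnW.
    rewrite -scalemxAr Nghat // !mulmxDr -!scalemxAr !scalerDr.
    by rewrite addrACA.
  by rewrite mulmx0 !addr0 -scalemxAr scalerDr.
set Q := Cmat q K.
set H := Hmat h beta K.
set B := Bmat alpha beta K.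
have SQ : S *m Q = N *m (Q *m H *m B) by rewrite -GB -QH.
have QtNQ : Q^T *m N *m Q = 1%:M.
  apply/matrixP => i j; rewrite mx_entry_mul row_mul -tr_col !col_Cmat.
  change (bf N (q i.+1) (q j.+1) = (1%:M : 'M[R]_K) i j).
  by rewrite orthK ?ltn_ord // eqSS mxE.
have posS : posdef S.
  move=> x xnz.
  have Axnz : A *m x != 0 by apply: contra xnz => /eqP /HAinj ->.
  have e : qf S x = qf (invmx M) (A *m x) + qf C x.
    rewrite /qf /S mulmxDr mulmxDl mxE; congr (_ + _).
    by rewrite trmx_mul !mulmxA.
  have p1 := posdef_inv HM Axnz.
  have p2 := HC x.
  rewrite e; lra.
have QtSQ : Q^T *m S *m Q = H *m B.
  by rewrite -mulmxA SQ !mulmxA QtNQ mul1mx.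
have posHB : posdef (H *m B).
  move=> x xnz.
  have Qxnz : Q *m x != 0.
    apply: contra xnz => /eqP e.
    by rewrite -(mul1mx x) -QtNQ -mulmxA e mulmx0.
  have := posS _ Qxnz.
  by rewrite -QtSQ /qf trmx_mul !mulmxA.
have uHB := posdef_unit posHB.
have uH : H \in unitmx by move: uHB; rewrite unitmx_mul => /andP [].
have uB : B \in unitmx by move: uHB; rewrite unitmx_mul => /andP [].
have HBy : H *m B *m craig_y alpha beta h K = - (beta 1%N *: e1 R K).
  rewrite /craig_y -/H -/B mulmxN; congr (- _).
  rewrite !mulmxA -(mulmxA H B) mulmxV // mulmx1 mulmxV // mul1mx //.
have Sp : S *m craig_p q alpha beta h K = - b.
  rewrite /craig_p QE -/Q mulmxA SQ -!mulmxA (mulmxA H) HBy /Q.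
  rewrite mulmxN -scalemxAr Cmat_e1 // Hq1 mulmxN -!scalemxAr mulKVmx //.
  by rewrite scalerA mulfV ?scale1r //; exact: lt0r_neq0.
have ustarE : ustar = - (invmx M *m A *m pstar).
  have e : M *m ustar = - (A *m pstar) by apply/eqP; rewrite -addr_eq0 Hs1.
  by rewrite -(mulKmx uM ustar) e mulmxN mulmxA.
have Sps : S *m pstar = - b.
  rewrite -Hs2 opprB /S mulmxDl ustarE mulmxN opprK addrC.
  by rewrite !mulmxA.
have peq : craig_p q alpha beta h K = pstar.
  apply/eqP; rewrite -subr_eq0; apply/eqP; apply: (posdef_eq0 posS).
  by rewrite /qf -mulmxA mulmxBr Sp Sps subrr mulmx0 mxE.
split => //.
by rewrite /craig_u peq ustarE.
Qed.
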